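(* Let $\alpha=(\alpha_n)_{n\in\mathbb{N}}\in\ell^2$ and let $f_\alpha(z)=\sum_{n\ge0}\alpha_n z^n$. The following statements are equivalent: (i) the Rhaly operator $R_\alpha$, $(R_\alpha f)(k)=\alpha_k\sum_{j=0}^k f(j)$, is compact on $\ell^2$; (ii) $f_\alpha$ belongs to $\lambda^2_{1/2}$; (iii) $\displaystyle\lim_{n\to\infty} 2^n\sum_{j=2^n}^{2^{n+1}-1}|\alpha_j|^2=0$.
   Context: $\mathbb{N}=\{0,1,2,\dots\}$; $\ell^2$ is the Hilbert space of square-summable functions $f:\mathbb{N}\to\mathbb{C}$. For $\alpha\in\ell^2$, $f_\alpha\in H^2$ (Hardy space of the unit disc), identified with its boundary function on $\mathbb{T}$. The small mean Lipschitz space is $\lambda^2_{1/2}=\{f\in L^2(\mathbb{T}): \sup_{t}|t|^{-1/2}\|f_t-f\|_{L^2}<\infty \text{ and } \lim_{t\to0}|t|^{-1/2}\|f_t-f\|_{L^2}=0\}$, where $f_t(e^{i\theta})=f(e^{i(\theta-t)})$. *)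

(* Defs.v *)
From Stdlib Require Import Reals.
From Coquelicot Require Import Coquelicot.
Open Scope R_scope.

Definition cexpi (x : R) : C := (cos x, sin x).

Definition in_l2 (f : nat -> C) : Prop :=
  ex_series (fun n => (Cmod (f n)) ^ 2).

Definition l2norm (f : nat -> C) : R :=
  sqrt (Series (fun n => (Cmod (f n)) ^ 2)).

Definition rhaly (alpha : nat -> C) (f : nat -> C) (k : nat) : C :=
  Cmult (alpha k) (sum_n f k).

Definition compact_on_l2 (T : (nat -> C) -> (nat -> C)) : Prop :=
  (forall f, in_l2 f -> in_l2 (T f)) /\
  (forall u : nat -> (nat -> C),
      (forall m, in_l2 (u m) /\ l2norm (u m) <= 1) ->
      exists phi : nat -> nat,
        (forall m, (phi m < phi (S m))%nat) /\
        exists g : nat -> C, in_l2 g /\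
          is_lim_seq (fun m => l2norm (fun k => Cminus (T (u (phi m)) k) (g k))) 0).

Definition fpartial (alpha : nat -> C) (N : nat) (theta : R) : C :=
  sum_n (fun n => Cmult (alpha n) (cexpi (INR n * theta))) N.

Definition transl_diff_sq_partial (alpha : nat -> C) (t : R) (N : nat) : R :=
  RInt (fun theta => (Cmod (Cminus (fpartial alpha N (theta - t))
                                   (fpartial alpha N theta))) ^ 2) 0 (2 * PI)
  / (2 * PI).

(* || (f_alpha)_t - f_alpha ||_{L^2(T)}, the boundary function of f_alpha being the
   L^2 limit of the partial sums *)
Definition transl_diff (alpha : nat -> C) (t : R) : R :=
  sqrt (real (Lim_seq (transl_diff_sq_partial alpha t))).

Definition in_small_mean_lip (alpha : nat -> C) : Prop :=
  (exists M : R, forall t : R, t <> 0 -> transl_diff alpha t / sqrt (Rabs t) <= M) /\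
  is_lim (fun t => transl_diff alpha t / sqrt (Rabs t)) 0 0.

Definition dyadic_block (alpha : nat -> C) (n : nat) : R :=
  2 ^ n * sum_n_m (fun j => (Cmod (alpha j)) ^ 2) (2 ^ n) (2 ^ (S n) - 1).

(* Main.v *)
Require Import Defs.
From Stdlib Require Import Reals.
From Coquelicot Require Import Coquelicot.
From Stdlib Require Import Lra Lia Psatz Arith Classical ClassicalEpsilon.
Open Scope R_scope.

Lemma sum_n_S_R (a : nat -> R) n : sum_n a (S n) = sum_n a n + a (S n).
Proof. rewrite sum_Sn. reflexivity. Qed.

Lemma sum_n_nonneg (a : nat -> R) n : (forall k, 0 <= a k) -> 0 <= sum_n a n.
Proof. intros H; induction n. rewrite sum_O; auto. rewrite sum_n_S_R; specialize (H (S n)); lra. Qed.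

Lemma sum_n_mono (a : nat -> R) n m : (forall k, 0 <= a k) -> (n <= m)%nat -> sum_n a n <= sum_n a m.
Proof. intros H Hnm; induction Hnm. lra. rewrite sum_n_S_R; specialize (H (S m)); lra. Qed.

Lemma nonneg_bounded_series (a : nat -> R) (X : R) :
  (forall n, 0 <= a n) -> (forall N, sum_n a N <= X) -> ex_series a /\ Series a <= X.
Proof.
  intros H0 HX.
  assert (incr : forall n, sum_n a n <= sum_n a (S n)).
  { intros n; rewrite sum_n_S_R; specialize (H0 (S n)); lra. }
  destruct (ex_finite_lim_seq_incr _ _ incr HX) as [l Hl].
  assert (Hs : is_series a l) by exact Hl.
  split. exists l; exact Hs.
  rewrite (is_series_unique _ _ Hs).
  pose proof (is_lim_seq_le _ _ _ _ HX Hl (is_lim_seq_const X)) as H; simpl in H; exact H.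
Qed.

Lemma partial_le_series (a : nat -> R) N :
  (forall n, 0 <= a n) -> ex_series a -> sum_n a N <= Series a.
Proof.
  intros H0 Hex. pose proof (Series_correct _ Hex) as Hs.
  apply (is_lim_seq_incr_compare (sum_n a) (Series a) Hs).
  intros n; rewrite sum_n_S_R; specialize (H0 (S n)); lra.
Qed.

Definition blk (c : nat -> R) (m : nat) : R := sum_n_m c (2 ^ m - 1) (2 ^ S m - 2).

Lemma pow2_ge1 m : (1 <= 2 ^ m)%nat.
Proof. induction m; simpl; lia. Qed.

Lemma block_decomp (c : nat -> R) M : sum_n c (2 ^ S M - 2) = sum_n (blk c) M.
Proof.
  induction M.
  - rewrite !sum_O. unfold blk. simpl. rewrite sum_n_n. reflexivity.
  - rewrite sum_Sn, <- IHM. unfold blk. unfold sum_n.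
    pose proof (pow2_ge1 M).
    rewrite (sum_n_m_Chasles c 0 (2 ^ S M - 2) (2 ^ S (S M) - 2)).
    + f_equal. f_equal. simpl. lia.
    + simpl; lia.
    + simpl; lia.
Qed.

Lemma sum_n_zero_R N : sum_n (fun _ : nat => 0) N = 0.
Proof. induction N. rewrite sum_O; auto. rewrite sum_n_S_R, IHN. apply Rplus_0_r. Qed.

Lemma fst_sum_n (f : nat -> C) N : fst (sum_n f N) = sum_n (fun n => fst (f n)) N.
Proof. induction N. rewrite !sum_O; auto. rewrite sum_Sn, sum_n_S_R, <- IHN. reflexivity. Qed.
Lemma snd_sum_n (f : nat -> C) N : snd (sum_n f N) = sum_n (fun n => snd (f n)) N.
Proof. induction N. rewrite !sum_O; auto. rewrite sum_Sn, sum_n_S_R, <- IHN. reflexivity. Qed.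

Lemma Cmod_sq (z : C) : Cmod z ^ 2 = fst z ^ 2 + snd z ^ 2.
Proof. unfold Cmod. rewrite pow2_sqrt; auto. nra. Qed.

Lemma is_RInt_ext_R (f g : R -> R) a b (l : R) : (forall x, f x = g x) -> is_RInt f a b l -> is_RInt g a b l.
Proof. intros; apply (is_RInt_ext f); auto. Qed.

Lemma is_RInt_sum_n (g : nat -> R -> R) (I : nat -> R) a b N :
  (forall n, (n <= N)%nat -> is_RInt (g n) a b (I n)) ->
  is_RInt (fun x => sum_n (fun n => g n x) N) a b (sum_n I N).
Proof.
  induction N; intros H.
  - rewrite sum_O. apply (is_RInt_ext (g 0%nat)). intros; rewrite sum_O; auto. apply H; lia.
  - rewrite sum_Sn. apply (is_RInt_ext (fun x => plus (sum_n (fun n => g n x) N) (g (S N) x))).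
    intros; rewrite sum_Sn; auto.
    apply (is_RInt_plus (V:=R_NormedModule)). apply IHN; intros; apply H; lia. apply H; lia.
Qed.

Lemma int_trig (k : nat) (P Q : R) : (1 <= k)%nat ->
  is_RInt (fun t => P * cos (INR k * t) + Q * sin (INR k * t)) 0 (2 * PI) 0.
Proof.
  intros Hk. assert (Hk' : INR k <> 0). { apply not_0_INR; lia. }
  set (F := fun t => P * sin (INR k * t) / INR k - Q * cos (INR k * t) / INR k).
  assert (E : minus (F (2 * PI)) (F 0) = 0).
  { unfold F, minus, plus, opp; simpl.
    replace (INR k * (2 * PI)) with (0 + 2 * INR k * PI) by ring.
    rewrite cos_period, sin_period. rewrite Rmult_0_r, sin_0, cos_0. field. auto. }
  assert (H : is_RInt (fun t => P * cos (INR k * t) + Q * sin (INR k * t)) 0 (2 * PI) (minus (F (2 * PI)) (F 0))).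
  { apply (is_RInt_derive (V:=R_CompleteNormedModule) F).
  - intros x _. unfold F. auto_derive. auto. field. auto.
  - intros x _. apply (ex_derive_continuous (K:=R_AbsRing) (V:=R_NormedModule)). auto_derive. auto. }
  rewrite E in H. exact H.
Qed.

Lemma Cmod_cexpi x : Cmod (cexpi x) = 1.
Proof. unfold Cmod, cexpi; simpl. rewrite Rmult_1_r, Rmult_1_r. pose proof (sin2_cos2 x). unfold Rsqr in H. rewrite <- sqrt_1. f_equal. lra. Qed.

Definition Tpoly (c : nat -> C) (N : nat) (t : R) : C :=
  sum_n (fun n => Cmult (c n) (cexpi (INR n * t))) N.

Lemma fst_Tpoly c N t : fst (Tpoly c N t) = sum_n (fun n => fst (c n) * cos (INR n * t) - snd (c n) * sin (INR n * t)) N.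
Proof. unfold Tpoly; rewrite fst_sum_n. apply sum_n_ext; intros n. unfold cexpi; simpl. ring. Qed.
Lemma snd_Tpoly c N t : snd (Tpoly c N t) = sum_n (fun n => fst (c n) * sin (INR n * t) + snd (c n) * cos (INR n * t)) N.
Proof. unfold Tpoly; rewrite snd_sum_n. apply sum_n_ext; intros n. unfold cexpi; simpl. ring. Qed.

Lemma cross_id (c : nat -> C) N (K x y t : R) :
  fst (Tpoly c N t) * (x * cos (K * t) - y * sin (K * t)) + snd (Tpoly c N t) * (x * sin (K * t) + y * cos (K * t))
  = sum_n (fun n => (fst (c n) * x + snd (c n) * y) * cos ((K - INR n) * t) + (snd (c n) * x - fst (c n) * y) * sin ((K - INR n) * t)) N.
Proof.
  rewrite fst_Tpoly, snd_Tpoly.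
  induction N.
  - rewrite !sum_O. replace ((K - INR 0) * t) with (K * t - INR 0 * t) by ring.
    rewrite cos_minus, sin_minus. ring.
  - rewrite !sum_n_S_R. rewrite <- IHN.
    replace ((K - INR (S N)) * t) with (K * t - INR (S N) * t) by ring.
    rewrite cos_minus, sin_minus. ring.
Qed.

Lemma parseval_poly (c : nat -> C) N :
  is_RInt (fun t => Cmod (Tpoly c N t) ^ 2) 0 (2 * PI) (2 * PI * sum_n (fun n => Cmod (c n) ^ 2) N).
Proof.
  induction N.
  - rewrite sum_O. apply (is_RInt_ext_R (fun _ => Cmod (c 0%nat) ^ 2)).
    + intros t. unfold Tpoly. rewrite sum_O. unfold cexpi. simpl (INR 0). fold (cexpi (0 * t)). rewrite Cmod_mult.
      rewrite Cmod_cexpi. ring.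
    + pose proof (is_RInt_const 0 (2 * PI) (Cmod (c 0%nat) ^ 2)) as H.
      replace (2 * PI * Cmod (c 0%nat) ^ 2) with (scal (2 * PI - 0) (Cmod (c 0%nat) ^ 2)). exact H.
      unfold scal; simpl; unfold mult; simpl. ring.
  - set (x := fst (c (S N))). set (y := snd (c (S N))). set (K := INR (S N)).
    apply (is_RInt_ext_R (fun t => plus (plus (Cmod (Tpoly c N t) ^ 2)
       (2 * sum_n (fun n => (fst (c n) * x + snd (c n) * y) * cos ((K - INR n) * t) + (snd (c n) * x - fst (c n) * y) * sin ((K - INR n) * t)) N))
       (Cmod (c (S N)) ^ 2))).
    + intros t. rewrite <- cross_id. rewrite !Cmod_sq.
      assert (E1 : fst (Tpoly c (S N) t) = fst (Tpoly c N t) + (x * cos (K * t) - y * sin (K * t))).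
      { rewrite !fst_Tpoly, sum_n_S_R. reflexivity. }
      assert (E2 : snd (Tpoly c (S N) t) = snd (Tpoly c N t) + (x * sin (K * t) + y * cos (K * t))).
      { rewrite !snd_Tpoly, sum_n_S_R. reflexivity. }
      rewrite E1, E2. fold x y. unfold plus; simpl.
      pose proof (sin2_cos2 (K * t)). unfold Rsqr in H. nra.
    + replace (2 * PI * sum_n (fun n => Cmod (c n) ^ 2) (S N)) with
        (plus (plus (2 * PI * sum_n (fun n => Cmod (c n) ^ 2) N) (2 * 0)) (scal (2 * PI - 0) (Cmod (c (S N)) ^ 2))).
      2:{ rewrite sum_n_S_R. unfold plus, scal; simpl; unfold mult; simpl. ring. }
      apply (is_RInt_plus (V:=R_NormedModule)). apply (is_RInt_plus (V:=R_NormedModule)). exact IHN.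
      * replace (2 * 0) with (scal 2 (sum_n (fun _ : nat => 0) N)).
        apply (is_RInt_scal (V:=R_NormedModule) (fun t => sum_n _ N)).
        apply is_RInt_sum_n. intros n Hn.
        replace (K - INR n) with (INR (S N - n)).
        apply int_trig. lia. unfold K. rewrite minus_INR. auto. lia.
        unfold scal; simpl; unfold mult; simpl. rewrite sum_n_zero_R. ring.
      * apply (is_RInt_const (V:=R_NormedModule)).
Qed.

Definition sfun (alpha : nat -> C) (t : R) (n : nat) : R :=
  Cmod (alpha n) ^ 2 * (2 - 2 * cos (INR n * t)).

Lemma Ceq (z w : C) : fst z = fst w -> snd z = snd w -> z = w.
Proof. destruct z, w; simpl; intros; subst; auto. Qed.

Lemma Cminus_plus (a b c d : C) : Cminus (Cplus a b) (Cplus c d) = Cplus (Cminus a c) (Cminus b d).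
Proof. apply Ceq; simpl; ring. Qed.

Lemma term_diff (a : C) (n : nat) t th :
  Cminus (Cmult a (cexpi (INR n * (th - t)))) (Cmult a (cexpi (INR n * th))) =
  Cmult (Cmult a (Cminus (cexpi (- (INR n * t))) 1)) (cexpi (INR n * th)).
Proof.
  replace (INR n * (th - t)) with (- (INR n * t) + INR n * th) by ring.
  unfold cexpi. rewrite cos_plus, sin_plus. apply Ceq; simpl; ring.
Qed.

Lemma sum_n_S_C (a : nat -> C) n : sum_n a (S n) = Cplus (sum_n a n) (a (S n)).
Proof. rewrite sum_Sn. unfold plus. simpl. reflexivity. Qed.

Lemma fpartial_diff alpha N t th :
  Cminus (fpartial alpha N (th - t)) (fpartial alpha N th) =
  Tpoly (fun n => Cmult (alpha n) (Cminus (cexpi (- (INR n * t))) 1)) N th.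
Proof.
  unfold fpartial, Tpoly. induction N.
  - rewrite !sum_O. apply term_diff.
  - rewrite !sum_n_S_C. rewrite Cminus_plus, IHN, term_diff. reflexivity.
Qed.

Lemma Cmod_coef alpha n t :
  Cmod (Cmult (alpha n) (Cminus (cexpi (- (INR n * t))) 1)) ^ 2 = sfun alpha t n.
Proof.
  unfold sfun. rewrite Cmod_mult, Rpow_mult_distr. f_equal.
  rewrite Cmod_sq. unfold cexpi; simpl. rewrite cos_neg, sin_neg.
  pose proof (sin2_cos2 (INR n * t)). unfold Rsqr in H. nra.
Qed.

Lemma tdsp_eq alpha t N : transl_diff_sq_partial alpha t N = sum_n (sfun alpha t) N.
Proof.
  unfold transl_diff_sq_partial.
  rewrite (RInt_ext _ (fun th => Cmod (Tpoly (fun n => Cmult (alpha n) (Cminus (cexpi (- (INR n * t))) 1)) N th) ^ 2)).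
  2:{ intros x _. rewrite fpartial_diff. reflexivity. }
  rewrite (is_RInt_unique _ _ _ _ (parseval_poly _ N)).
  rewrite (sum_n_ext _ (sfun alpha t)). 2:{ intros; apply Cmod_coef. }
  field. apply PI_neq0.
Qed.

Lemma transl_diff_eq alpha t : transl_diff alpha t = sqrt (Series (sfun alpha t)).
Proof.
  unfold transl_diff, Series. f_equal. f_equal. apply Lim_seq_ext. apply tdsp_eq.
Qed.

Lemma sum_n_m_nonneg (a : nat -> R) n m : (forall k, 0 <= a k) -> 0 <= sum_n_m a n m.
Proof.
  intros H. destruct (le_lt_dec n m) as [Hl|Hl].
  - induction Hl. rewrite sum_n_n; auto.
    rewrite sum_n_Sm by lia. specialize (H (S m)). unfold plus; simpl. lra.
  - rewrite sum_n_m_zero by lia. unfold zero; simpl; lra.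
Qed.

Lemma sum_n_m_le_loc (a b : nat -> R) n m :
  (forall k, (n <= k <= m)%nat -> a k <= b k) -> sum_n_m a n m <= sum_n_m b n m.
Proof.
  intros H. destruct (le_lt_dec n m) as [Hl|Hl].
  - induction Hl. rewrite !sum_n_n; apply H; lia.
    rewrite !sum_n_Sm by lia. unfold plus; simpl.
    assert (a (S m) <= b (S m)) by (apply H; lia).
    assert (sum_n_m a n m <= sum_n_m b n m) by (apply IHHl; intros; apply H; lia). lra.
  - rewrite !sum_n_m_zero by lia. unfold zero; simpl; lra.
Qed.

Lemma sum_n_m_sub (a : nat -> R) n m n' m' :
  (forall k, 0 <= a k) -> (n <= n')%nat -> (m' <= m)%nat -> sum_n_m a n' m' <= sum_n_m a n m.
Proof.
  intros H0 H1 H2. destruct (le_lt_dec n' m') as [Hl|Hl].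
  2:{ rewrite sum_n_m_zero by lia. unfold zero; simpl. apply sum_n_m_nonneg; auto. }
  assert (E1 : sum_n_m a n m = plus (sum_n_m a n m') (sum_n_m a (S m') m)) by (apply sum_n_m_Chasles; lia).
  assert (sum_n_m a n m' >= sum_n_m a n' m').
  { destruct (Nat.eq_dec n n') as [->|Hne]. lra.
    assert (E2 : sum_n_m a n m' = plus (sum_n_m a n (n' - 1)) (sum_n_m a (S (n' - 1)) m')) by (apply sum_n_m_Chasles; lia).
    replace (S (n' - 1)) with n' in E2 by lia. rewrite E2. unfold plus; simpl.
    pose proof (sum_n_m_nonneg a n (n' - 1) H0). lra. }
  rewrite E1. unfold plus; simpl. pose proof (sum_n_m_nonneg a (S m') m H0). lra.
Qed.

Lemma sum_n_m_le_sum_n (a : nat -> R) n m : (forall k, 0 <= a k) -> sum_n_m a n m <= sum_n a m.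
Proof. intros H. unfold sum_n. apply sum_n_m_sub; auto; lia. Qed.

Lemma term_le_sum_n_m (a : nat -> R) n m k : (forall k, 0 <= a k) -> (n <= k <= m)%nat -> a k <= sum_n_m a n m.
Proof. intros H Hk. rewrite <- sum_n_n. apply sum_n_m_sub; auto; lia. Qed.

Lemma sin_sq_le y : sin y ^ 2 <= y ^ 2.
Proof.
  assert (forall z, 0 < z -> - z <= sin z <= z).
  { intros z Hz. split.
    - destruct (Rle_lt_dec z PI). pose proof (sin_ge_0 z). lra.
      pose proof (SIN_bound z). pose proof PI_RGT_0. pose proof PI2_1. lra.
    - pose proof (sin_lt_x z Hz). lra. }
  destruct (Rtotal_order y 0) as [Hy|[Hy|Hy]].
  - specialize (H (- y) ltac:(lra)). rewrite sin_neg in H. nra.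
  - subst. rewrite sin_0. nra.
  - specialize (H y Hy). nra.
Qed.

Lemma one_minus_cos x : 2 - 2 * cos x <= x ^ 2.
Proof.
  replace x with (2 * (x / 2)) at 1 by field. rewrite cos_2a_sin.
  pose proof (sin_sq_le (x / 2)). simpl in H. replace (x ^ 2) with (4 * ((x/2) * ((x/2) * 1))) by (simpl; field). nra.
Qed.

Section Alpha.
Variable alpha : nat -> C.
Definition aa (n : nat) : R := Cmod (alpha n) ^ 2.
Lemma aa_nonneg n : 0 <= aa n.
Proof. unfold aa. pose proof (Cmod_ge_0 (alpha n)). nra. Qed.

Lemma sfun_nonneg t n : 0 <= sfun alpha t n.
Proof. unfold sfun. pose proof (COS_bound (INR n * t)). pose proof (aa_nonneg n). unfold aa in H0. nra. Qed.
Lemma sfun_le4 t n : sfun alpha t n <= 4 * aa n.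
Proof. unfold sfun. pose proof (COS_bound (INR n * t)). pose proof (aa_nonneg n). unfold aa in *. nra. Qed.
Lemma sfun_le_sq t n : sfun alpha t n <= aa n * (INR n * t) ^ 2.
Proof. unfold sfun. pose proof (one_minus_cos (INR n * t)). pose proof (aa_nonneg n). unfold aa in *. nra. Qed.
Lemma sfun_even t n : sfun alpha (- t) n = sfun alpha t n.
Proof. unfold sfun. replace (INR n * - t) with (- (INR n * t)) by ring. rewrite cos_neg. auto. Qed.

Hypothesis hal : in_l2 alpha.

Lemma ex_series_aa : ex_series aa.
Proof. exact hal. Qed.

Lemma ex_series_sfun t : ex_series (sfun alpha t).
Proof.
  apply (ex_series_le (K:=R_AbsRing) (V:=R_CompleteNormedModule) _ (fun n => 4 * aa n)).
  - intros n. unfold norm; simpl. rewrite Rabs_pos_eq. apply sfun_le4. apply sfun_nonneg.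
  - apply (ex_series_scal_l (K:=R_AbsRing) (V:=R_CompleteNormedModule) 4 aa). exact ex_series_aa.
Qed.

Lemma S_le_4A t : Series (sfun alpha t) <= 4 * Series aa.
Proof.
  rewrite <- Series_scal_l. apply Series_le.
  intros; split. apply sfun_nonneg. apply sfun_le4.
  apply (ex_series_scal_l (K:=R_AbsRing) (V:=R_CompleteNormedModule) 4 aa). exact ex_series_aa.
Qed.

End Alpha.

Lemma INR_pow2 n : INR (2 ^ n) = 2 ^ n.
Proof. rewrite pow_INR. simpl. replace (1 + 1) with 2 by ring. auto. Qed.

Lemma pow2_gt0 n : 0 < 2 ^ n.
Proof. apply pow_lt; lra. Qed.

Lemma sqrt_ratio_lt S t e : 0 <= S -> 0 < t -> sqrt S / sqrt t < e -> S < e ^ 2 * t.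
Proof.
  intros HS Ht H. pose proof (sqrt_lt_R0 t Ht). pose proof (sqrt_pos S).
  assert (sqrt S < e * sqrt t). { apply (Rmult_lt_compat_r (sqrt t)) in H; auto. field_simplify in H; lra. }
  pose proof (sqrt_sqrt S HS). pose proof (sqrt_sqrt t (Rlt_le _ _ Ht)).
  assert (0 <= e * sqrt t) by lra. simpl. nra.
Qed.

Lemma sqrt_ratio_le S t c : 0 <= S -> 0 < t -> S <= c * t -> sqrt S / sqrt t <= sqrt c.
Proof.
  intros HS Ht H. pose proof (sqrt_lt_R0 t Ht).
  assert (0 <= c). { destruct (Rle_lt_dec 0 c); auto. nra. }
  apply (Rmult_le_reg_r (sqrt t)); auto. field_simplify; try lra.
  rewrite <- sqrt_mult; auto; try lra. apply sqrt_le_1_alt. lra.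
Qed.

Lemma pow_half_small (d : R) : 0 < d -> exists N, forall n, (N <= n)%nat -> / 2 ^ n < d.
Proof.
  intros Hd. destruct (pow_lt_1_zero (/2) ltac:(rewrite Rabs_pos_eq; lra) d Hd) as [N HN].
  exists N. intros n Hn. specialize (HN n Hn). rewrite Rabs_pos_eq in HN. rewrite pow_inv in HN. auto.
  apply pow_le. lra.
Qed.

Section Alpha2.
Variable alpha : nat -> C.
Hypothesis hal : in_l2 alpha.

Lemma S_nonneg t : 0 <= Series (sfun alpha t).
Proof. apply Rle_trans with (sum_n (sfun alpha t) 0). apply sum_n_nonneg, sfun_nonneg.
  apply partial_le_series. apply sfun_nonneg. apply ex_series_sfun; auto. Qed.

Lemma lower_block n :
  sum_n_m (aa alpha) (2 ^ n) (2 ^ S n - 1) <= Series (sfun alpha (PI / 3 / 2 ^ n)).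
Proof.
  set (t := PI / 3 / 2 ^ n). pose proof (pow2_gt0 n). pose proof PI_RGT_0.
  apply Rle_trans with (sum_n_m (sfun alpha t) (2 ^ n) (2 ^ S n - 1)).
  - apply sum_n_m_le_loc. intros k Hk.
    assert (Hk1 : 2 ^ n <= INR k). { rewrite <- INR_pow2. apply le_INR; lia. }
    assert (Hk2 : INR k <= 2 * 2 ^ n). { rewrite <- INR_pow2. replace 2 with (INR 2) at 1 by (simpl; lra). rewrite <- mult_INR. apply le_INR. simpl in Hk |- *. lia. }
    assert (PI / 3 <= INR k * t) by (unfold t; apply (Rmult_le_reg_r (2 ^ n)); auto; field_simplify; nra).
    assert (INR k * t <= 2 * (PI / 3)) by (unfold t; apply (Rmult_le_reg_r (2 ^ n)); auto; field_simplify; nra).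
    assert (cos (INR k * t) <= 1 / 2).
    { rewrite <- cos_PI3. apply cos_decr_1; lra. }
    unfold sfun. fold (aa alpha k). pose proof (aa_nonneg alpha k). nra.
  - apply Rle_trans with (sum_n (sfun alpha t) (2 ^ S n - 1)).
    apply sum_n_m_le_sum_n. apply sfun_nonneg.
    apply partial_le_series. apply sfun_nonneg. apply ex_series_sfun; auto.
Qed.

Lemma ii_to_iii :
  is_lim (fun t => transl_diff alpha t / sqrt (Rabs t)) 0 0 -> is_lim_seq (dyadic_block alpha) 0.
Proof.
  intros Hl. apply is_lim_spec in Hl. apply is_lim_seq_spec. intros eps.
  assert (He : 0 < Rmin 1 (eps / 2)). { apply Rmin_pos; try lra. destruct eps; simpl; lra. }
  destruct (Hl (mkposreal _ He)) as [delta Hd]. simpl in Hd.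
  destruct (pow_half_small (delta / 2) ltac:(destruct delta; simpl; lra)) as [N HN].
  exists N. intros n Hn. specialize (HN n Hn).
  set (t := PI / 3 / 2 ^ n). pose proof (pow2_gt0 n). pose proof PI_RGT_0. pose proof PI_4.
  assert (Ht : 0 < t) by (unfold t; apply Rdiv_lt_0_compat; lra).
  assert (Htd : t < delta). { unfold t. assert (E : PI / 3 / 2 ^ n = (PI/3) * (/2^n)) by (unfold Rdiv; ring).
     rewrite E. pose proof (Rinv_0_lt_compat (2 ^ n) H). nra. }
  specialize (Hd t). 
  assert (Hb : ball 0 delta t). { unfold ball; simpl; unfold AbsRing_ball; simpl. unfold abs, minus, plus, opp; simpl. rewrite Rabs_pos_eq; lra. }
  specialize (Hd Hb ltac:(lra)).
  rewrite transl_diff_eq in Hd. rewrite Rminus_0_r, Rabs_pos_eq in Hd.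
  2:{ apply Rmult_le_pos. apply sqrt_pos. left. apply Rinv_0_lt_compat. apply sqrt_lt_R0. apply Rabs_pos_lt. lra. }
  rewrite (Rabs_pos_eq t) in Hd by lra.
  apply sqrt_ratio_lt in Hd; auto.
  2:{ apply S_nonneg. }
  pose proof (lower_block n) as Hlb. fold t in Hlb.
  unfold dyadic_block. fold (aa alpha).
  pose proof (sum_n_m_nonneg (aa alpha) (2 ^ n) (2 ^ S n - 1) (aa_nonneg alpha)).
  rewrite Rminus_0_r, Rabs_pos_eq by nra.
  set (e := Rmin 1 (eps / 2)) in *.
  assert (e <= 1) by apply Rmin_l. assert (e <= eps / 2) by apply Rmin_r.
  assert (E : 2 ^ n * t = PI / 3) by (unfold t; field; lra).
  assert (2 ^ n * sum_n_m (aa alpha) (2 ^ n) (2 ^ S n - 1) < e ^ 2 * (PI / 3)).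
  { rewrite <- E. assert (sum_n_m (aa alpha) (2 ^ n) (2 ^ S n - 1) < e ^ 2 * t) by lra.
    replace (e ^ 2 * (2 ^ n * t)) with (2 ^ n * (e ^ 2 * t)) by ring. nra. }
  assert (e ^ 2 <= e) by (simpl; nra).
  assert (e ^ 2 * (PI / 3) <= e * (4 / 3)) by (assert (0 <= e ^ 2) by (simpl; nra); nra).
  destruct eps as [eps Heps]; simpl in *. lra.
Qed.
End Alpha2.

Lemma sum_n_m_Rmult_r (a : nat -> R) c n m : sum_n_m (fun k => a k * c) n m = sum_n_m a n m * c.
Proof. apply (sum_n_m_mult_r (K:=R_Ring)). Qed.

Lemma sum_n_Rmult_l (a : nat -> R) c n : sum_n (fun k => c * a k) n = c * sum_n a n.
Proof. apply (sum_n_mult_l (K:=R_Ring)). Qed.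

Lemma if_split (X Y : nat -> R) n M :
  (forall k, 0 <= X k) -> (forall k, 0 <= Y k) ->
  sum_n (fun m => if (m <=? n)%nat then X m else Y m) M <= sum_n X n + sum_n_m Y (S n) M.
Proof.
  intros HX HY. pose proof (sum_n_m_nonneg Y (S n) M HY).
  destruct (le_lt_dec M n).
  - rewrite (sum_n_ext_loc _ X). 2:{ intros k Hk. replace (k <=? n)%nat with true; auto. symmetry; apply Nat.leb_le; lia. }
    pose proof (sum_n_mono X M n HX l). lra.
  - unfold sum_n. rewrite (sum_n_m_Chasles _ 0 n M) by lia. unfold plus; simpl.
    rewrite (sum_n_m_ext_loc _ X 0 n). 2:{ intros k Hk. replace (k <=? n)%nat with true; auto. symmetry; apply Nat.leb_le; lia. }
    rewrite (sum_n_m_ext_loc _ Y (S n) M). 2:{ intros k Hk. replace (k <=? n)%nat with false; auto. symmetry; apply Nat.leb_gt; lia. }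
    lra.
Qed.

Lemma geo_tail (Y : nat -> R) c n M :
  (forall m, (n < m)%nat -> 0 <= Y m <= c / 2 ^ m) -> 0 <= c -> sum_n_m Y (S n) M <= c / 2 ^ n.
Proof.
  intros HY Hc. pose proof (pow2_gt0 n).
  destruct (le_lt_dec M n).
  - rewrite sum_n_m_zero by lia. unfold zero; simpl. apply Rdiv_le_0_compat; lra.
  - assert (forall k, sum_n_m Y (S n) (n + k) <= c / 2 ^ n - c / 2 ^ (n + k)).
    { induction k.
      - rewrite sum_n_m_zero by lia. unfold zero; simpl. rewrite Nat.add_0_r. lra.
      - replace (n + S k)%nat with (S (n + k)) by lia. rewrite sum_n_Sm by lia. unfold plus; simpl.
        specialize (HY (S (n + k)) ltac:(lia)). simpl in HY.
        pose proof (pow2_gt0 (n + k)). 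
        assert (c / (2 * 2 ^ (n + k)) = c / 2 ^ (n + k) / 2) by (field; lra).
        simpl. lra. }
    replace M with (n + (M - n))%nat by lia. specialize (H0 (M - n)%nat).
    pose proof (pow2_gt0 (n + (M - n))). assert (0 <= c / 2 ^ (n + (M - n))) by (apply Rdiv_le_0_compat; lra). lra.
Qed.

Lemma exists_dyadic t : 0 < t -> t <= 1 -> exists n, / 2 < 2 ^ n * t <= 1.
Proof.
  intros Ht Ht1.
  assert (forall k, 1 < 2 ^ k * t -> exists n, / 2 < 2 ^ n * t <= 1).
  { induction k; intros Hk. simpl in Hk; lra.
    destruct (Rle_lt_dec (2 ^ k * t) 1). exists k. simpl in Hk. lra. auto. }
  destruct (pow_half_small t Ht) as [N HN]. apply (H N). specialize (HN N (le_n _)).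
  pose proof (pow2_gt0 N). apply (Rmult_lt_compat_l (2 ^ N)) in HN; auto. rewrite Rinv_r in HN; lra.
Qed.

Section Alpha3.
Variable alpha : nat -> C.
Hypothesis hal : in_l2 alpha.

Definition dd (m : nat) : R := 2 ^ m * blk (aa alpha) m.
Lemma dd_nonneg m : 0 <= dd m.
Proof. unfold dd, blk. pose proof (pow2_gt0 m). pose proof (sum_n_m_nonneg (aa alpha) (2 ^ m - 1) (2 ^ S m - 2) (aa_nonneg alpha)). nra. Qed.

Lemma D_nonneg m : 0 <= dyadic_block alpha m.
Proof. unfold dyadic_block. fold (aa alpha). pose proof (pow2_gt0 m). pose proof (sum_n_m_nonneg (aa alpha) (2 ^ m) (2 ^ S m - 1) (aa_nonneg alpha)). nra. Qed.

Lemma dd_le m : (1 <= m)%nat -> dd m <= 2 * dyadic_block alpha (m - 1) + dyadic_block alpha m.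
Proof.
  intros Hm. unfold dd, blk, dyadic_block. fold (aa alpha).
  pose proof (pow2_ge1 m). 
  assert (E : (2 ^ S m = 2 * 2 ^ m)%nat) by (simpl; lia).
  rewrite sum_Sn_m by lia. replace (S (2 ^ m - 1)) with (2 ^ m)%nat by lia. unfold plus; simpl.
  assert (h1 : aa alpha (2 ^ m - 1) <= sum_n_m (aa alpha) (2 ^ (m - 1)) (2 ^ S (m - 1) - 1)).
  { apply term_le_sum_n_m. apply aa_nonneg. replace (S (m - 1)) with m by lia.
    split; [| lia]. destruct m. lia. simpl. rewrite Nat.sub_0_r. simpl in H. lia. }
  assert (h2 : sum_n_m (aa alpha) (2 ^ m) (2 ^ S m - 2) <= sum_n_m (aa alpha) (2 ^ m) (2 ^ S m - 1)).
  { apply sum_n_m_sub. apply aa_nonneg. lia. lia. }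
  assert (Ep : 2 ^ m = 2 * 2 ^ (m - 1)). { destruct m. lia. simpl. rewrite Nat.sub_0_r. auto. }
  pose proof (pow2_gt0 m). pose proof (aa_nonneg alpha (2 ^ m - 1)).
  simpl in h1, h2 |- *. rewrite Ep at 1. 
  set (A := aa alpha (2 ^ m - 1)) in *.
  set (B1 := sum_n_m (aa alpha) (2 ^ (m - 1)) _) in *.
  set (B2 := sum_n_m (aa alpha) (2 ^ m) (2 ^ m + (2 ^ m + 0) - 1)) in *.
  set (B3 := sum_n_m (aa alpha) (2 ^ m) (2 ^ m + (2 ^ m + 0) - 2)) in *.
  rewrite <- Ep. nra.
Qed.

Lemma dd_to0 : is_lim_seq (dyadic_block alpha) 0 -> is_lim_seq dd 0.
Proof.
  intros H. apply is_lim_seq_spec in H. apply is_lim_seq_spec. intros eps.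
  assert (He : 0 < eps / 3) by (destruct eps; simpl; lra).
  destruct (H (mkposreal _ He)) as [N HN]. simpl in HN.
  exists (S N). intros m Hm. 
  pose proof (HN (m - 1)%nat ltac:(lia)). pose proof (HN m ltac:(lia)).
  pose proof (dd_le m ltac:(lia)). pose proof (dd_nonneg m).
  pose proof (D_nonneg (m - 1)). pose proof (D_nonneg m).
  rewrite Rminus_0_r, Rabs_pos_eq in * by lra. lra.
Qed.

Lemma bounded_of_lim (u : nat -> R) : (forall m, 0 <= u m) -> is_lim_seq u 0 -> exists E, forall m, u m <= E.
Proof.
  intros H0 H. apply is_lim_seq_spec in H. destruct (H (mkposreal 1 Rlt_0_1)) as [N HN]. simpl in HN.
  exists (1 + sum_n u N). intros m. destruct (le_lt_dec N m).
  - specialize (HN m l). rewrite Rminus_0_r, Rabs_pos_eq in HN by auto. pose proof (sum_n_nonneg u N H0). lra.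
  - assert (u m <= sum_n u N). { unfold sum_n. rewrite <- sum_n_n. apply sum_n_m_sub; auto; lia. } lra.
Qed.

Definition GG (n : nat) : R := sum_n (fun m => 2 ^ m * dd m) n / 2 ^ n.

Lemma GG_nonneg n : 0 <= GG n.
Proof. unfold GG. apply Rdiv_le_0_compat. apply sum_n_nonneg. intros k. pose proof (pow2_gt0 k). pose proof (dd_nonneg k). nra. apply pow2_gt0. Qed.

Lemma GG_rec n : GG (S n) = GG n / 2 + dd (S n).
Proof. unfold GG. rewrite sum_n_S_R. pose proof (pow2_gt0 n). simpl. field. lra. Qed.

Lemma GG_bound E : (forall m, dd m <= E) -> forall n, GG n <= 2 * E.
Proof.
  intros HE. assert (0 <= E) by (pose proof (dd_nonneg 0); pose proof (HE 0%nat); lra).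
  induction n. unfold GG. rewrite sum_O. simpl. specialize (HE 0%nat). lra.
  rewrite GG_rec. specialize (HE (S n)). lra.
Qed.

Lemma GG_to0 : is_lim_seq dd 0 -> is_lim_seq GG 0.
Proof.
  intros H. destruct (bounded_of_lim dd dd_nonneg H) as [E HE].
  apply is_lim_seq_spec in H. apply is_lim_seq_spec. intros eps.
  assert (He : 0 < eps / 4) by (destruct eps; simpl; lra).
  destruct (H (mkposreal _ He)) as [K HK]. simpl in HK.
  assert (E0 : 0 <= E) by (pose proof (dd_nonneg 0); pose proof (HE 0%nat); lra).
  assert (Hk : forall k, GG (K + k) <= GG K / 2 ^ k + eps / 2).
  { induction k. simpl. rewrite Nat.add_0_r. destruct eps; simpl in *. lra.
    replace (K + S k)%nat with (S (K + k)) by lia. rewrite GG_rec.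
    specialize (HK (S (K + k)) ltac:(lia)). pose proof (dd_nonneg (S (K + k))).
    rewrite Rminus_0_r, Rabs_pos_eq in HK by auto. pose proof (pow2_gt0 k).
    assert (GG K / 2 ^ S k = GG K / 2 ^ k / 2) by (simpl; field; lra). lra. }
  destruct (pow_half_small (eps / 2 / (2 * E + 1))) as [N HN].
  { apply Rdiv_lt_0_compat; destruct eps; simpl; lra. }
  exists (K + N)%nat. intros n Hn. specialize (HN (n - K)%nat ltac:(lia)).
  specialize (Hk (n - K)%nat). replace (K + (n - K))%nat with n in Hk by lia.
  pose proof (GG_nonneg n). rewrite Rminus_0_r, Rabs_pos_eq by auto.
  pose proof (GG_bound E HE K). pose proof (GG_nonneg K). pose proof (pow2_gt0 (n - K)).
  assert (GG K / 2 ^ (n - K) <= (2 * E + 1) * / 2 ^ (n - K)) by (unfold Rdiv; apply Rmult_le_compat_r; [left; apply Rinv_0_lt_compat; auto | lra]).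
  assert ((2 * E + 1) * / 2 ^ (n - K) < eps / 2).
  { apply (Rmult_lt_compat_l (2 * E + 1)) in HN; [|lra]. replace ((2 * E + 1) * (eps / 2 / (2 * E + 1))) with (eps / 2) in HN by (field; lra). lra. }
  lra.
Qed.

Lemma blk_sfun_le t n m : 0 < t ->
  blk (sfun alpha t) m <= (if (m <=? n)%nat then 4 * t ^ 2 * (2 ^ m * dd m) else 4 * dd m / 2 ^ m).
Proof.
  intros Ht. pose proof (pow2_gt0 m). destruct (m <=? n)%nat.
  - unfold dd. apply Rle_trans with (blk (aa alpha) m * (4 * 4 ^ m * t ^ 2)).
    + unfold blk. rewrite <- sum_n_m_Rmult_r. apply sum_n_m_le_loc. intros k Hk.
      apply Rle_trans with (aa alpha k * (INR k * t) ^ 2). apply sfun_le_sq.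
      apply Rmult_le_compat_l. apply aa_nonneg.
      assert (INR k <= 2 * 2 ^ m). { rewrite <- INR_pow2. replace 2 with (INR 2) at 1 by (simpl; lra). rewrite <- mult_INR. apply le_INR. simpl in Hk |- *. lia. }
      pose proof (pos_INR k). replace (4 ^ m) with (2 ^ m * 2 ^ m) by (rewrite <- Rpow_mult_distr; f_equal; lra).
      assert (0 <= INR k * t) by nra. assert (INR k * t <= 2 * 2 ^ m * t) by nra.
      replace (4 * (2 ^ m * 2 ^ m) * t ^ 2) with ((2 * 2 ^ m * t) ^ 2) by ring. apply pow_incr; lra.
    + replace (4 ^ m) with (2 ^ m * 2 ^ m) by (rewrite <- Rpow_mult_distr; f_equal; lra).
      right. ring.
  - unfold dd. apply Rle_trans with (blk (aa alpha) m * 4).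
    + unfold blk. rewrite <- sum_n_m_Rmult_r. apply sum_n_m_le_loc. intros k Hk.
      rewrite Rmult_comm. apply sfun_le4.
    + right. field. lra.
Qed.

Lemma upper_S t n E2 : 0 < t -> 2 ^ n * t <= 1 -> / 2 ^ n <= 2 * t ->
  (forall m, (n < m)%nat -> dd m <= E2) -> Series (sfun alpha t) <= t * (4 * GG n + 8 * E2).
Proof.
  intros Ht H1 H2 HE.
  pose proof (pow2_gt0 n).
  assert (E0 : 0 <= E2) by (pose proof (HE (S n) ltac:(lia)); pose proof (dd_nonneg (S n)); lra).
  apply nonneg_bounded_series. apply sfun_nonneg. intros N.
  apply Rle_trans with (sum_n (sfun alpha t) (2 ^ S N - 2)).
  { apply sum_n_mono. apply sfun_nonneg. assert (N < 2 ^ N)%nat by (apply Nat.pow_gt_lin_r; lia). simpl. lia. }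
  rewrite block_decomp.
  apply Rle_trans with (sum_n (fun m => if (m <=? n)%nat then 4 * t ^ 2 * (2 ^ m * dd m) else 4 * dd m / 2 ^ m) N).
  { apply sum_n_m_le_loc. intros k _. apply blk_sfun_le; auto. }
  eapply Rle_trans. apply if_split.
  { intros k. pose proof (pow2_gt0 k). pose proof (dd_nonneg k). assert (0 <= t ^ 2) by (simpl; nra). 
    apply Rmult_le_pos; [lra| nra]. }
  { intros k. pose proof (pow2_gt0 k). pose proof (dd_nonneg k). apply Rdiv_le_0_compat; lra. }
  rewrite sum_n_Rmult_l.
  assert (Ht2 : sum_n_m (fun m => 4 * dd m / 2 ^ m) (S n) N <= 4 * E2 / 2 ^ n).
  { apply geo_tail; [| lra]. intros m Hm. pose proof (pow2_gt0 m). pose proof (dd_nonneg m). specialize (HE m Hm).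
    split. apply Rdiv_le_0_compat; lra. unfold Rdiv. apply Rmult_le_compat_r. left; apply Rinv_0_lt_compat; auto. lra. }
  assert (H0 : GG n * 2 ^ n = sum_n (fun m => 2 ^ m * dd m) n) by (unfold GG; field; lra).
  rewrite <- H0. pose proof (GG_nonneg n).
  assert (4 * E2 / 2 ^ n <= 8 * t * E2) by (unfold Rdiv; nra).
  assert (E1 : 4 * t ^ 2 * (GG n * 2 ^ n) = 4 * GG n * (t * (2 ^ n * t))) by ring.
  assert (4 * GG n * (t * (2 ^ n * t)) <= 4 * GG n * (t * 1)).
  { apply Rmult_le_compat_l. lra. apply Rmult_le_compat_l; lra. }
  lra.
Qed.

End Alpha3.

Section Alpha4.
Variable alpha : nat -> C.
Hypothesis hal : in_l2 alpha.

Lemma S_abs t : Series (sfun alpha t) = Series (sfun alpha (Rabs t)).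
Proof.
  unfold Rabs. destruct (Rcase_abs t); auto. apply Series_ext. intros n. rewrite sfun_even. auto.
Qed.

Lemma transl_abs t : transl_diff alpha t / sqrt (Rabs t) = sqrt (Series (sfun alpha (Rabs t))) / sqrt (Rabs t).
Proof. rewrite transl_diff_eq, S_abs. auto. Qed.

Lemma key_bound u n E2 : 0 < u -> / 2 < 2 ^ n * u <= 1 ->
  (forall m, (n < m)%nat -> dd alpha m <= E2) -> Series (sfun alpha u) <= u * (4 * GG alpha n + 8 * E2).
Proof.
  intros Hu Hn HE. apply upper_S; auto. lra.
  pose proof (pow2_gt0 n). apply (Rmult_le_reg_l (2 ^ n)); auto. rewrite Rinv_r by lra. nra.
Qed.

Lemma iii_to_ii : is_lim_seq (dyadic_block alpha) 0 -> in_small_mean_lip alpha.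
Proof.
  intros HD. pose proof (dd_to0 alpha HD) as Hd. pose proof (GG_to0 alpha Hd) as HG.
  destruct (bounded_of_lim _ (dd_nonneg alpha) Hd) as [E HE].
  assert (E0 : 0 <= E) by (pose proof (dd_nonneg alpha 0); pose proof (HE 0%nat); lra).
  set (A := Series (aa alpha)).
  assert (A0 : 0 <= A). { unfold A. apply Rle_trans with (sum_n (aa alpha) 0). apply sum_n_nonneg, aa_nonneg.
     apply partial_le_series. apply aa_nonneg. apply ex_series_aa; auto. }
  split.
  - exists (sqrt (16 * E + 4 * A)). intros t Ht. rewrite transl_abs.
    set (u := Rabs t). assert (Hu : 0 < u) by (apply Rabs_pos_lt; auto).
    apply sqrt_ratio_le; auto. apply S_nonneg; auto.
    destruct (Rle_lt_dec u 1).
    + destruct (exists_dyadic u Hu r) as [n Hn].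
      eapply Rle_trans. apply (key_bound u n E); auto.
      pose proof (GG_bound alpha E HE n). nra.
    + pose proof (S_le_4A alpha hal u). fold A in H. nra.
  - apply is_lim_spec. intros eps.
    set (eta := eps ^ 2 / 48).
    assert (Heta : 0 < eta) by (unfold eta; destruct eps; simpl; nra).
    apply is_lim_seq_spec in Hd. apply is_lim_seq_spec in HG.
    destruct (Hd (mkposreal _ Heta)) as [K1 HK1]. destruct (HG (mkposreal _ Heta)) as [K2 HK2]. simpl in HK1, HK2.
    set (K := (K1 + K2)%nat).
    pose proof (pow2_gt0 (S K)).
    assert (Hdel : 0 < / 2 ^ S K) by (apply Rinv_0_lt_compat; auto).
    exists (mkposreal _ Hdel). intros t Hb Ht. simpl in Hb.
    unfold ball in Hb; simpl in Hb; unfold AbsRing_ball in Hb; simpl in Hb. unfold abs, minus, plus, opp in Hb; simpl in Hb.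
    rewrite Ropp_0, Rplus_0_r in Hb. change (2 * 2 ^ K) with (2 ^ S K) in Hb.
    rewrite transl_abs. set (u := Rabs t) in *. assert (Hu : 0 < u) by (apply Rabs_pos_lt; auto).
    assert (Hu1 : u <= 1). { assert (1 <= 2 ^ S K) by (apply pow_R1_Rle; lra).
      apply Rlt_le, (Rlt_le_trans _ _ _ Hb). rewrite <- Rinv_1. apply Rinv_le_contravar; lra. }
    destruct (exists_dyadic u Hu Hu1) as [n Hn].
    assert (HnK : (K < n)%nat).
    { destruct (le_lt_dec n K); auto. exfalso.
      assert (2 ^ n <= 2 ^ K) by (apply Rle_pow; lra || lia).
      assert (2 ^ S K * u < 1). { apply (Rmult_lt_compat_l (2 ^ S K)) in Hb; auto. rewrite Rinv_r in Hb; lra. }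
      simpl in H1. pose proof (pow2_gt0 K). nra. }
    assert (HGn : GG alpha n <= eta). { specialize (HK2 n ltac:(unfold K in *; lia)). pose proof (GG_nonneg alpha n).
       rewrite Rminus_0_r, Rabs_pos_eq in HK2; lra. }
    assert (Hbd : Series (sfun alpha u) <= (eps / 2) ^ 2 * u).
    { eapply Rle_trans. apply (key_bound u n eta); auto.
      intros m Hm. specialize (HK1 m ltac:(unfold K in *; lia)). pose proof (dd_nonneg alpha m).
      rewrite Rminus_0_r, Rabs_pos_eq in HK1; lra.
      unfold eta in *. simpl in *. nra. }
    pose proof (sqrt_ratio_le _ _ _ (S_nonneg alpha hal u) Hu Hbd).
    rewrite sqrt_pow2 in H0. 2:{ destruct eps; simpl; lra. }
    rewrite Rminus_0_r, Rabs_pos_eq.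
    2:{ apply Rdiv_le_0_compat. apply sqrt_pos. apply sqrt_lt_R0; auto. }
    destruct eps; simpl in *; lra.
Qed.
End Alpha4.

Lemma plus_R (x y : R) : plus x y = x + y.
Proof. reflexivity. Qed.

Lemma cs_block (v : nat -> R) p L :
  (sum_n_m v p (p + L)) ^ 2 <= INR (S L) * sum_n_m (fun j => v j ^ 2) p (p + L).
Proof.
  induction L.
  - rewrite Nat.add_0_r, !sum_n_n. simpl. lra.
  - replace (p + S L)%nat with (S (p + L)) by lia. rewrite !sum_n_Sm by lia. rewrite !plus_R.
    set (X := sum_n_m v p (p + L)) in *. set (Q := sum_n_m (fun j => v j ^ 2) p (p + L)) in *.
    set (y := v (S (p + L))).
    assert (HQ : 0 <= Q) by (apply sum_n_m_nonneg; intros; simpl; nra).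
    rewrite !S_INR in *. pose proof (pos_INR L).
    assert (Hm : 2 * X * y <= Q + (INR L + 1) * y ^ 2).
    { assert ((INR L + 1) * (2 * X * y) <= (INR L + 1) * (Q + (INR L + 1) * y ^ 2)).
      { assert (0 <= (X - (INR L + 1) * y) ^ 2) by (apply pow2_ge_0). nra. }
      apply Rmult_le_reg_l with (INR L + 1); lra. }
    replace ((X + y) ^ 2) with (X ^ 2 + 2 * X * y + y ^ 2) by ring. change (plus Q (y ^ 2)) with (Q + y ^ 2).
    nra.
Qed.

Fixpoint II (P : nat -> R) (n : nat) : R :=
  match n with 0 => P 0%nat | S n' => 2 / 3 * II P n' + (P (S n') - P n') end.

Lemma II_nonneg P : (forall n, 0 <= P n) -> (forall n, P n <= P (S n)) -> forall n, 0 <= II P n.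
Proof. intros H0 H1 n. induction n; simpl. auto. specialize (H1 n). lra. Qed.

Lemma II_sum P : (forall n, 0 <= P n) -> (forall n, P n <= P (S n)) -> forall M, sum_n (II P) M + 2 * II P M <= 3 * P M.
Proof.
  intros H0 H1 M. induction M.
  - rewrite sum_O. simpl. lra.
  - rewrite sum_n_S_R. simpl. simpl in IHM. lra.
Qed.

Section Hardy.
Variables (a v : nat -> R).
Hypothesis a0 : forall k, 0 <= a k.
Hypothesis v0 : forall k, 0 <= v k.

Definition UU n := sum_n v (2 ^ S n - 2).
Definition PP n := sum_n (fun j => v j ^ 2) (2 ^ S n - 2).

Lemma v2_nonneg k : 0 <= v k ^ 2.
Proof. simpl. specialize (v0 k). nra. Qed.

Lemma PP_nonneg n : 0 <= PP n.
Proof. apply sum_n_nonneg, v2_nonneg. Qed.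

Lemma split_next (c : nat -> R) n : sum_n c (2 ^ S (S n) - 2) = sum_n c (2 ^ S n - 2) + sum_n_m c (2 ^ S n - 1) (2 ^ S (S n) - 2).
Proof.
  pose proof (pow2_ge1 n). unfold sum_n. rewrite (sum_n_m_Chasles c 0 (2 ^ S n - 2) (2 ^ S (S n) - 2)).
  unfold plus; simpl. f_equal. f_equal. simpl. lia. simpl; lia. simpl; lia.
Qed.

Lemma PP_incr n : PP n <= PP (S n).
Proof. unfold PP. rewrite split_next. pose proof (sum_n_m_nonneg _ (2 ^ S n - 1) (2 ^ S (S n) - 2) v2_nonneg). lra. Qed.

Lemma UU_bound n : UU n ^ 2 <= 4 * 2 ^ n * II PP n.
Proof.
  induction n.
  - unfold UU, PP. simpl. rewrite !sum_O. simpl. specialize (v0 0%nat). nra.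
  - simpl II. unfold UU in *. rewrite split_next.
    set (U := sum_n v (2 ^ S n - 2)) in *.
    set (W := sum_n_m v (2 ^ S n - 1) (2 ^ S (S n) - 2)).
    assert (HV : PP (S n) - PP n = sum_n_m (fun j => v j ^ 2) (2 ^ S n - 1) (2 ^ S (S n) - 2)).
    { unfold PP. rewrite split_next. ring. }
    assert (HW : W ^ 2 <= 2 ^ S n * (PP (S n) - PP n)).
    { rewrite HV. unfold W. pose proof (pow2_ge1 n).
      replace (2 ^ S (S n) - 2)%nat with (2 ^ S n - 1 + (2 ^ S n - 1))%nat by (simpl; lia).
      pose proof (cs_block v (2 ^ S n - 1) (2 ^ S n - 1)) as Hc.
      replace (INR (S (2 ^ S n - 1))) with (2 ^ S n) in Hc. exact Hc.
      rewrite <- INR_pow2. f_equal. simpl; lia. }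
    assert ((U + W) ^ 2 <= 4 / 3 * U ^ 2 + 4 * W ^ 2).
    { assert (0 <= (U - 3 * W) ^ 2) by apply pow2_ge_0. nra. }
    change (2 ^ S n) with (2 * 2 ^ n) in *. lra.
Qed.

Lemma blk_sub (c : nat -> R) N0 M : (1 <= N0)%nat -> (N0 <= M)%nat ->
  sum_n_m c (2 ^ N0 - 1) (2 ^ S M - 2) = sum_n_m (blk c) N0 M.
Proof.
  intros H1 H2. destruct N0. lia.
  replace (2 ^ S N0 - 1)%nat with (S (2 ^ S N0 - 2)) by (pose proof (pow2_ge1 N0); simpl; lia).
  rewrite (sum_n_m_sum_n (G:=R_AbelianGroup)) by (pose proof (pow2_ge1 N0); pose proof (Nat.pow_le_mono_r 2 (S N0) (S M)); simpl in *; lia).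
  rewrite (sum_n_m_sum_n (G:=R_AbelianGroup)) by lia. rewrite !block_decomp. replace (2 ^ S N0 - 2)%nat with (2 ^ S (N0) - 2)%nat by lia. reflexivity.
Qed.

Lemma hardy (eta : R) N0 M : (1 <= N0)%nat -> (N0 <= M)%nat ->
  (forall n, (N0 <= n)%nat -> blk a n <= eta / 2 ^ n) ->
  sum_n_m (fun k => a k * (sum_n v k) ^ 2) (2 ^ N0 - 1) (2 ^ S M - 2) <= 12 * eta * PP M.
Proof.
  intros H1 H2 Hb. rewrite blk_sub by auto.
  assert (He : 0 <= eta).
  { specialize (Hb N0 (le_n _)). pose proof (pow2_gt0 N0). 
    assert (0 <= blk a N0) by (apply sum_n_m_nonneg; auto).
    apply (Rmult_le_compat_r (2 ^ N0)) in Hb; [|lra]. unfold Rdiv in Hb. rewrite Rmult_assoc, Rinv_l in Hb; nra. }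
  apply Rle_trans with (sum_n_m (fun n => 4 * eta * II PP n) N0 M).
  - apply sum_n_m_le_loc. intros n Hn.
    apply Rle_trans with (blk a n * UU n ^ 2).
    + unfold blk. rewrite <- sum_n_m_Rmult_r. apply sum_n_m_le_loc. intros k Hk.
      apply Rmult_le_compat_l; auto.
      assert (0 <= sum_n v k) by (apply sum_n_nonneg; auto).
      assert (sum_n v k <= UU n) by (unfold UU; apply sum_n_mono; auto; lia).
      apply pow_incr; lra.
    + pose proof (UU_bound n). specialize (Hb n ltac:(lia)). pose proof (pow2_gt0 n).
      assert (0 <= blk a n) by (apply sum_n_m_nonneg; auto).
      pose proof (II_nonneg PP PP_nonneg PP_incr n).
      apply Rle_trans with (blk a n * (4 * 2 ^ n * II PP n)). apply Rmult_le_compat_l; auto.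
      apply Rle_trans with (eta / 2 ^ n * (4 * 2 ^ n * II PP n)). apply Rmult_le_compat_r; auto. nra.
      right. field. lra.
  - apply Rle_trans with (sum_n (fun n => 4 * eta * II PP n) M).
    apply sum_n_m_le_sum_n. intros; pose proof (II_nonneg PP PP_nonneg PP_incr k); nra.
    rewrite sum_n_Rmult_l. pose proof (II_sum PP PP_nonneg PP_incr M). pose proof (II_nonneg PP PP_nonneg PP_incr M).
    nra.
Qed.

End Hardy.

Definition sincr (f : nat -> nat) := forall m, (f m < f (S m))%nat.

Lemma sincr_lt f : sincr f -> forall a b, (a < b)%nat -> (f a < f b)%nat.
Proof. intros H a b Hab. induction Hab. apply H. specialize (H m). lia. Qed.
Lemma sincr_le f : sincr f -> forall a b, (a <= b)%nat -> (f a <= f b)%nat.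
Proof. intros H a b Hab. destruct (Nat.eq_dec a b). subst; lia. pose proof (sincr_lt f H a b ltac:(lia)). lia. Qed.
Lemma sincr_ge f : sincr f -> forall a, (a <= f a)%nat.
Proof. intros H a. induction a. lia. specialize (H a). lia. Qed.

Lemma BW1 (s : nat -> R) (B : R) : (forall m, Rabs (s m) <= B) ->
  exists tau, sincr tau /\ ex_finite_lim_seq (fun m => s (tau m)).
Proof.
  intros Hb.
  destruct (Bolzano_Weierstrass s (fun c => - B <= c <= B) (compact_P3 (- B) B)) as [l Hl].
  { intros n. specialize (Hb n). unfold Rabs in Hb. destruct (Rcase_abs (s n)); lra. }
  assert (H : forall kN : nat * nat, exists p, (snd kN <= p)%nat /\ Rabs (s p - l) < / (INR (fst kN) + 1)).
  { intros [k N]. simpl.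
    assert (Hp : 0 < / (INR k + 1)) by (apply Rinv_0_lt_compat; pose proof (pos_INR k); lra).
    destruct (Hl (fun y => Rabs (y - l) < / (INR k + 1)) N) as [p [Hp1 Hp2]].
    { exists (mkposreal _ Hp). intros y Hy. unfold disc in Hy. simpl in Hy. auto. }
    exists p. auto. }
  destruct (choice _ H) as [f Hf].
  set (tau := fix tau k := match k with 0%nat => f (0%nat, 0%nat) | S k' => f (S k', S (tau k')) end).
  exists tau. split.
  - intros m. simpl. destruct (Hf (S m, S (tau m))) as [H1 _]. simpl in H1. lia.
  - exists l. apply is_lim_seq_spec. intros eps.
    destruct (archimed_cor1 eps (cond_pos eps)) as [N [HN1 HN2]].
    exists N. intros n Hn.
    assert (Hn' : Rabs (s (tau n) - l) < / (INR n + 1)).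
    { destruct n. simpl. apply (Hf (0%nat, 0%nat)). simpl. apply (Hf (S n, S (tau n))). }
    apply Rlt_trans with (/ (INR n + 1)); auto.
    apply Rle_lt_trans with (/ INR N); auto.
    apply Rinv_le_contravar. apply lt_0_INR; lia. apply le_INR in Hn. lra.
Qed.

Lemma diag (x : nat -> nat -> R) (B : R) : (forall m j, Rabs (x m j) <= B) ->
  exists phi, sincr phi /\ forall j, ex_finite_lim_seq (fun m => x (phi m) j).
Proof.
  intros Hb.
  assert (H : forall sj : (nat -> nat) * nat, exists tau, sincr tau /\ ex_finite_lim_seq (fun m => x (fst sj (tau m)) (snd sj))).
  { intros [sg j]. simpl. apply (BW1 (fun m => x (sg m) j) B). intros; apply Hb. }
  destruct (choice _ H) as [T HT].
  set (Psi := fix Psi j := match j with 0%nat => T (fun m => m, 0%nat) | S j' => fun m => Psi j' (T (Psi j', S j') m) end).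
  assert (P1 : forall j, sincr (Psi j)).
  { induction j. simpl. apply (HT (fun m => m, 0%nat)).
    intros m. simpl. apply sincr_lt; auto. apply (HT (Psi j, S j)). }
  assert (P2 : forall j, ex_finite_lim_seq (fun m => x (Psi j m) j)).
  { destruct j. simpl. apply (HT (fun m => m, 0%nat)). simpl. apply (HT (Psi j, S j)). }
  assert (P3 : forall j k z, exists s, Psi (j + k)%nat z = Psi j s).
  { intros j k. induction k; intros z. exists z. rewrite Nat.add_0_r. auto.
    replace (j + S k)%nat with (S (j + k)) by lia. simpl. apply IHk. }
  exists (fun m => Psi m m). split.
  - intros m. simpl. 
    pose proof (sincr_ge _ (proj1 (HT (Psi m, S m))) (S m)).
    pose proof (sincr_le _ (P1 m) (S m) (T (Psi m, S m) (S m)) H0).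
    pose proof (P1 m m). simpl in *. lia.
  - intros j. destruct (P2 j) as [l Hl]. exists l.
    apply is_lim_seq_spec in Hl. apply is_lim_seq_spec. intros eps.
    destruct (Hl eps) as [K HK].
    exists (j + S (Psi j K))%nat. intros m Hm.
    destruct (P3 j (m - j)%nat m) as [s Hs]. replace (j + (m - j))%nat with m in Hs by lia.
    rewrite Hs. apply HK.
    destruct (le_lt_dec K s); auto. exfalso.
    pose proof (sincr_lt _ (P1 j) s K l0).
    pose proof (sincr_ge _ (P1 m) m). lia.
Qed.

Lemma Cmod_sum_le (u : nat -> C) k : Cmod (sum_n u k) <= sum_n (fun j => Cmod (u j)) k.
Proof.
  induction k. rewrite !sum_O. lra.
  rewrite sum_n_S_C, sum_n_S_R. eapply Rle_trans. apply Cmod_triangle. lra.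
Qed.

Lemma sum_n_Cminus (u v : nat -> C) k : Cminus (sum_n u k) (sum_n v k) = sum_n (fun j => Cminus (u j) (v j)) k.
Proof.
  induction k. rewrite !sum_O. auto.
  rewrite !sum_n_S_C. rewrite <- IHk. apply Ceq; simpl; ring.
Qed.

Lemma Cmod_sq_nonneg (z : C) : 0 <= Cmod z ^ 2.
Proof. pose proof (Cmod_ge_0 z). nra. Qed.

Lemma Cmod_minus_sq (a b : C) : Cmod (Cminus a b) ^ 2 <= 2 * Cmod a ^ 2 + 2 * Cmod b ^ 2.
Proof. rewrite !Cmod_sq. destruct a as [r r0], b as [r1 r2]; simpl. pose proof (Rle_0_sqr (r + r1)). pose proof (Rle_0_sqr (r0 + r2)). unfold Rsqr in *. nra. Qed.

Lemma lim_sum_n (F : nat -> nat -> R) (l : nat -> R) N :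
  (forall j, (j <= N)%nat -> is_lim_seq (fun m => F m j) (l j)) ->
  is_lim_seq (fun m => sum_n (F m) N) (sum_n l N).
Proof.
  induction N; intros H.
  - rewrite sum_O. apply (is_lim_seq_ext (fun m => F m 0%nat)). intros; rewrite sum_O; auto. apply H; lia.
  - rewrite sum_n_S_R. apply (is_lim_seq_ext (fun m => sum_n (F m) N + F m (S N))).
    intros; rewrite sum_n_S_R; auto.
    apply is_lim_seq_plus'. apply IHN; intros; apply H; lia. apply H; lia.
Qed.

Lemma sum_n_2plus (p q : nat -> R) N : 2 * sum_n p N + 2 * sum_n q N = sum_n (fun j => 2 * p j + 2 * q j) N.
Proof. induction N. rewrite !sum_O; auto. rewrite !sum_n_S_R, <- IHN. ring. Qed.

Lemma series_le_of_l2norm (f : nat -> C) : in_l2 f -> l2norm f <= 1 -> forall N, sum_n (fun j => Cmod (f j) ^ 2) N <= 1.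
Proof.
  intros Hf Hn N. unfold l2norm in Hn.
  assert (Series (fun n => Cmod (f n) ^ 2) <= 1).
  { destruct (Rle_lt_dec (Series (fun n => Cmod (f n) ^ 2)) 1); auto.
    assert (sqrt 1 < sqrt (Series (fun n => Cmod (f n) ^ 2))) by (apply sqrt_lt_1_alt; lra).
    rewrite sqrt_1 in H. lra. }
  eapply Rle_trans. apply partial_le_series. intros; apply Cmod_sq_nonneg. exact Hf. auto.
Qed.

Section Rh.
Variable alpha : nat -> C.
Hypothesis hal : in_l2 alpha.

Lemma rhaly_bound f k : Cmod (rhaly alpha f k) ^ 2 <= aa alpha k * (sum_n (fun j => Cmod (f j)) k) ^ 2.
Proof.
  unfold rhaly, aa. rewrite Cmod_mult, Rpow_mult_distr. apply Rmult_le_compat_l. apply Cmod_sq_nonneg.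
  apply pow_incr. split. apply Cmod_ge_0. apply Cmod_sum_le.
Qed.

Lemma split_head (c : nat -> R) N0 X : (1 <= N0)%nat -> (2 ^ N0 - 2 <= X)%nat ->
  sum_n c X = sum_n c (2 ^ N0 - 2) + sum_n_m c (2 ^ N0 - 1) X.
Proof.
  intros H1 H2. pose proof (Nat.pow_le_mono_r 2 1 N0 ltac:(lia) H1). simpl in H.
  unfold sum_n. rewrite (sum_n_m_Chasles c 0 (2 ^ N0 - 2) X) by lia.
  replace (S (2 ^ N0 - 2)) with (2 ^ N0 - 1)%nat by lia. reflexivity.
Qed.

Lemma N_le_blk N : (N <= 2 ^ S N - 2)%nat.
Proof. assert (N < 2 ^ N)%nat by (apply Nat.pow_gt_lin_r; lia). simpl. lia. Qed.

Lemma tail_bound (v : nat -> R) (V eta : R) N0 M :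
  (forall j, 0 <= v j) -> (forall N, sum_n (fun j => v j ^ 2) N <= V) ->
  (1 <= N0)%nat -> (N0 <= M)%nat -> (forall n, (N0 <= n)%nat -> dd alpha n <= eta) ->
  sum_n_m (fun k => aa alpha k * (sum_n v k) ^ 2) (2 ^ N0 - 1) (2 ^ S M - 2) <= 12 * eta * V.
Proof.
  intros Hv HV H1 H2 Hd.
  assert (He : 0 <= eta) by (pose proof (Hd N0 (le_n _)); pose proof (dd_nonneg alpha N0); lra).
  eapply Rle_trans. apply hardy; auto. apply aa_nonneg.
  - intros n Hn. specialize (Hd n Hn). unfold dd in Hd. pose proof (pow2_gt0 n).
    apply (Rmult_le_reg_l (2 ^ n)); auto. replace (2 ^ n * (eta / 2 ^ n)) with eta by (field; lra). lra.
  - apply Rmult_le_compat_l. lra. apply HV.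
Qed.

Lemma total_bound (v : nat -> R) (V E : R) :
  (forall j, 0 <= v j) -> (forall N, sum_n (fun j => v j ^ 2) N <= V) -> (forall n, dd alpha n <= E) ->
  forall N, sum_n (fun k => aa alpha k * (sum_n v k) ^ 2) N <= (aa alpha 0 + 12 * E) * V.
Proof.
  intros Hv HV HE N.
  assert (HV0 : v 0%nat ^ 2 <= V) by (pose proof (HV 0%nat); rewrite sum_O in H; auto).
  assert (0 <= V) by (eapply Rle_trans; [|exact HV0]; apply v2_nonneg; auto).
  apply Rle_trans with (sum_n (fun k => aa alpha k * (sum_n v k) ^ 2) (2 ^ S (S N) - 2)).
  { apply sum_n_mono. intros; apply Rmult_le_pos. apply aa_nonneg. apply pow2_ge_0.
    pose proof (N_le_blk (S N)). lia. }
  rewrite (split_head _ 1); [| lia | pose proof (N_le_blk (S N)); simpl in *; lia].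
  simpl (2 ^ 1 - 2)%nat. simpl (2 ^ 1 - 1)%nat. rewrite sum_O, sum_O.
  pose proof (tail_bound v V E 1 (S N) Hv HV (le_n _) ltac:(lia) ltac:(intros; auto)).
  simpl (2 ^ 1 - 1)%nat in H0.
  pose proof (aa_nonneg alpha 0). nra.
Qed.

End Rh.

Section Rh2.
Variable alpha : nat -> C.
Hypothesis hal : in_l2 alpha.

Lemma maps_l2 E : (forall n, dd alpha n <= E) -> forall f, in_l2 f -> in_l2 (rhaly alpha f).
Proof.
  intros HE f Hf. unfold in_l2.
  set (V := Series (fun n => Cmod (f n) ^ 2)).
  assert (HV : forall N, sum_n (fun j => Cmod (f j) ^ 2) N <= V).
  { intros N. apply partial_le_series. intros; apply Cmod_sq_nonneg. exact Hf. }
  apply (nonneg_bounded_series _ ((aa alpha 0 + 12 * E) * V)). intros; apply Cmod_sq_nonneg.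
  intros N. eapply Rle_trans. apply sum_n_m_le. intros k. apply rhaly_bound.
  apply (total_bound alpha (fun j => Cmod (f j)) V E); auto. intros; apply Cmod_ge_0.
Qed.

Definition xenc (w : nat -> C) (j : nat) : R :=
  if Nat.even j then fst (w (Nat.div2 j)) else snd (w (Nat.div2 j)).

Lemma xenc_fst w j : xenc w (2 * j) = fst (w j).
Proof. unfold xenc. rewrite Nat.even_mul, Nat.div2_double. auto. Qed.
Lemma xenc_snd w j : xenc w (S (2 * j)) = snd (w j).
Proof. unfold xenc. rewrite Nat.even_succ, Nat.odd_mul, Nat.div2_succ_double. auto. Qed.

Lemma iii_to_i : is_lim_seq (dyadic_block alpha) 0 -> compact_on_l2 (rhaly alpha).
Proof.
  intros HD. pose proof (dd_to0 alpha HD) as Hd.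
  destruct (bounded_of_lim _ (dd_nonneg alpha) Hd) as [E HE].
  split. apply (maps_l2 E HE).
  intros u Hu.
  assert (Hp : forall m N, sum_n (fun j => Cmod (u m j) ^ 2) N <= 1).
  { intros m. apply series_le_of_l2norm; apply Hu. }
  assert (Hc : forall m j, Cmod (u m j) <= 1).
  { intros m j. pose proof (Hp m j). pose proof (Cmod_ge_0 (u m j)).
    assert (Cmod (u m j) ^ 2 <= 1).
    { eapply Rle_trans; [|exact H]. destruct j. rewrite sum_O; lra. rewrite sum_n_S_R.
      pose proof (sum_n_nonneg (fun j => Cmod (u m j) ^ 2) j (fun k => Cmod_sq_nonneg _)). lra. }
    nra. }
  destruct (diag (fun m j => xenc (u m) j) 1) as [phi [Hphi Hlim]].
  { intros m j. unfold xenc. pose proof (Rmax_Cmod (u m (Nat.div2 j))). pose proof (Hc m (Nat.div2 j)).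
    destruct (Nat.even j). pose proof (Rmax_l (Rabs (fst (u m (Nat.div2 j)))) (Rabs (snd (u m (Nat.div2 j))))). lra.
    pose proof (Rmax_r (Rabs (fst (u m (Nat.div2 j)))) (Rabs (snd (u m (Nat.div2 j))))). lra. }
  exists phi. split. exact Hphi.
  set (L := (fun j => (real (Lim_seq (fun m => fst (u (phi m) j))), real (Lim_seq (fun m => snd (u (phi m) j))))) : nat -> C).
  assert (HLf : forall j, is_lim_seq (fun m => fst (u (phi m) j)) (fst (L j))).
  { intros j. simpl. destruct (Hlim (2 * j)%nat) as [l Hl].
    apply (is_lim_seq_ext _ _ _ (fun m => xenc_fst (u (phi m)) j)) in Hl.
    rewrite (is_lim_seq_unique _ _ Hl). exact Hl. }
  assert (HLs : forall j, is_lim_seq (fun m => snd (u (phi m) j)) (snd (L j))).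
  { intros j. simpl. destruct (Hlim (S (2 * j))) as [l Hl].
    apply (is_lim_seq_ext _ _ _ (fun m => xenc_snd (u (phi m)) j)) in Hl.
    rewrite (is_lim_seq_unique _ _ Hl). exact Hl. }
  assert (HLc : forall j, is_lim_seq (fun m => Cmod (u (phi m) j) ^ 2) (Cmod (L j) ^ 2)).
  { intros j. rewrite Cmod_sq. apply (is_lim_seq_ext (fun m => fst (u (phi m) j) * fst (u (phi m) j) + snd (u (phi m) j) * snd (u (phi m) j))).
    intros m. rewrite Cmod_sq. ring.
    replace (fst (L j) ^ 2 + snd (L j) ^ 2) with (fst (L j) * fst (L j) + snd (L j) * snd (L j)) by ring.
    apply is_lim_seq_plus'; apply is_lim_seq_mult'; auto. }
  assert (HLp : forall N, sum_n (fun j => Cmod (L j) ^ 2) N <= 1).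
  { intros N. pose proof (lim_sum_n (fun m j => Cmod (u (phi m) j) ^ 2) (fun j => Cmod (L j) ^ 2) N (fun j _ => HLc j)).
    pose proof (is_lim_seq_le _ _ _ _ (fun m => Hp (phi m) N) H (is_lim_seq_const 1)). simpl in H0. exact H0. }
  assert (HL2 : in_l2 L).
  { apply (nonneg_bounded_series _ 1). intros; apply Cmod_sq_nonneg. exact HLp. }
  exists (rhaly alpha L). split. apply (maps_l2 E HE). exact HL2.
  set (w := fun m j => Cmod (Cminus (u (phi m) j) (L j))).
  assert (Hw : forall m N, sum_n (fun j => w m j ^ 2) N <= 4).
  { intros m N. eapply Rle_trans. apply sum_n_m_le. intros k. apply Cmod_minus_sq.
    fold (sum_n (fun k => 2 * Cmod (u (phi m) k) ^ 2 + 2 * Cmod (L k) ^ 2) N).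
    rewrite <- sum_n_2plus. pose proof (Hp (phi m) N). pose proof (HLp N). lra. }
  set (h := fun m k => Cminus (rhaly alpha (u (phi m)) k) (rhaly alpha L k)).
  assert (Hh : forall m k, Cmod (h m k) ^ 2 <= aa alpha k * (sum_n (w m) k) ^ 2).
  { intros m k. unfold h. replace (Cminus (rhaly alpha (u (phi m)) k) (rhaly alpha L k))
      with (rhaly alpha (fun j => Cminus (u (phi m) j) (L j)) k).
    apply rhaly_bound. unfold rhaly. rewrite <- sum_n_Cminus. apply Ceq; simpl; ring. }
  assert (Hhl : forall k, is_lim_seq (fun m => Cmod (h m k) ^ 2) 0).
  { intros k.
    pose proof (lim_sum_n (fun m j => fst (u (phi m) j)) (fun j => fst (L j)) k (fun j _ => HLf j)) as Hf.
    pose proof (lim_sum_n (fun m j => snd (u (phi m) j)) (fun j => snd (L j)) k (fun j _ => HLs j)) as Hs.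
    apply (is_lim_seq_ext (fun m => aa alpha k * ((sum_n (fun j => fst (u (phi m) j)) k - sum_n (fun j => fst (L j)) k) *
              (sum_n (fun j => fst (u (phi m) j)) k - sum_n (fun j => fst (L j)) k) +
              (sum_n (fun j => snd (u (phi m) j)) k - sum_n (fun j => snd (L j)) k) *
              (sum_n (fun j => snd (u (phi m) j)) k - sum_n (fun j => snd (L j)) k)))).
    { intros m. unfold h, rhaly, aa. symmetry.
      set (A := sum_n (u (phi m)) k). set (B := @sum_n C_AbelianMonoid L k).
      replace (Cminus (Cmult (alpha k) A) (Cmult (alpha k) B)) with (Cmult (alpha k) (Cminus A B)) by (apply Ceq; simpl; ring).
      rewrite Cmod_mult, Rpow_mult_distr. f_equal.
      rewrite Cmod_sq. change (fst (Cminus A B)) with (fst A - fst B). change (snd (Cminus A B)) with (snd A - snd B).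
      unfold A, B. rewrite !fst_sum_n, !snd_sum_n. ring. }
    replace 0 with (aa alpha k * ((sum_n (fun j => fst (L j)) k - sum_n (fun j => fst (L j)) k) *
              (sum_n (fun j => fst (L j)) k - sum_n (fun j => fst (L j)) k) +
              (sum_n (fun j => snd (L j)) k - sum_n (fun j => snd (L j)) k) *
              (sum_n (fun j => snd (L j)) k - sum_n (fun j => snd (L j)) k))) by ring.
    apply is_lim_seq_mult'. apply is_lim_seq_const.
    assert (Hf' : is_lim_seq (fun m => sum_n (fun j => fst (u (phi m) j)) k - sum_n (fun j => fst (L j)) k)
       (sum_n (fun j => fst (L j)) k - sum_n (fun j => fst (L j)) k)).
    { apply is_lim_seq_minus'; auto. apply is_lim_seq_const. }
    assert (Hs' : is_lim_seq (fun m => sum_n (fun j => snd (u (phi m) j)) k - sum_n (fun j => snd (L j)) k)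
       (sum_n (fun j => snd (L j)) k - sum_n (fun j => snd (L j)) k)).
    { apply is_lim_seq_minus'; auto. apply is_lim_seq_const. }
    apply is_lim_seq_plus'; apply is_lim_seq_mult'; auto. }
  apply is_lim_seq_spec. intros eps.
  set (eta := eps ^ 2 / 100).
  assert (Heta : 0 < eta) by (unfold eta; destruct eps; simpl; nra).
  apply is_lim_seq_spec in Hd. destruct (Hd (mkposreal _ Heta)) as [K HK]. simpl in HK.
  set (N0 := S K).
  assert (HdN : forall n, (N0 <= n)%nat -> dd alpha n <= eta).
  { intros n Hn. specialize (HK n ltac:(unfold N0 in Hn; lia)). pose proof (dd_nonneg alpha n).
    rewrite Rminus_0_r, Rabs_pos_eq in HK; lra. }
  set (head := fun m => sum_n (fun k => Cmod (h m k) ^ 2) (2 ^ N0 - 2)).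
  assert (Hhead : is_lim_seq head 0).
  { unfold head. rewrite <- (sum_n_zero_R (2 ^ N0 - 2)). apply lim_sum_n. intros; apply Hhl. }
  apply is_lim_seq_spec in Hhead. destruct (Hhead (mkposreal _ Heta)) as [K2 HK2]. simpl in HK2.
  exists K2. intros m Hm. specialize (HK2 m Hm).
  assert (H0h : 0 <= head m) by (apply sum_n_nonneg; intros; apply Cmod_sq_nonneg).
  rewrite Rminus_0_r, Rabs_pos_eq in HK2 by auto.
  destruct (nonneg_bounded_series (fun k => Cmod (h m k) ^ 2) (49 * eta)) as [Hex Hser].
  { intros; apply Cmod_sq_nonneg. }
  { intros N.
    assert (HM : (N <= 2 ^ S (N + N0) - 2)%nat) by (pose proof (N_le_blk (N + N0)); lia).
    apply Rle_trans with (sum_n (fun k => Cmod (h m k) ^ 2) (2 ^ S (N + N0) - 2)).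
    { apply sum_n_mono; auto. intros; apply Cmod_sq_nonneg. }
    rewrite (split_head _ N0). 2:{ unfold N0; lia. }
    2:{ pose proof (Nat.pow_le_mono_r 2 N0 (S (N + N0)) ltac:(lia) ltac:(lia)). lia. }
    fold (head m).
    assert (sum_n_m (fun k => Cmod (h m k) ^ 2) (2 ^ N0 - 1) (2 ^ S (N + N0) - 2) <= 12 * eta * 4).
    { eapply Rle_trans. apply sum_n_m_le. intros k. apply Hh.
      apply (tail_bound alpha (w m) 4 eta N0 (N + N0)); auto. intros; apply Cmod_ge_0. unfold N0; lia. lia. }
    lra. }
  assert (0 <= Series (fun k => Cmod (h m k) ^ 2)).
  { eapply Rle_trans. 2: apply (partial_le_series _ 0); auto. apply sum_n_nonneg. intros; apply Cmod_sq_nonneg.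
    intros; apply Cmod_sq_nonneg. }
  unfold l2norm. fold (h m). rewrite Rminus_0_r, Rabs_pos_eq by apply sqrt_pos.
  change (sqrt (Series (fun k => Cmod (h m k) ^ 2)) < eps).
  assert (He2 : 0 < eps ^ 2) by (destruct eps; simpl; nra).
  assert (Hlt : Series (fun k => Cmod (h m k) ^ 2) < eps ^ 2) by (unfold eta in Hser; lra).
  apply Rlt_le_trans with (sqrt (eps ^ 2)). apply sqrt_lt_1_alt; split; auto.
  rewrite sqrt_pow2. lra. destruct eps; simpl; lra.
Qed.
End Rh2.

Lemma sum_ind_R (P : nat) (c : R) k :
  INR (Nat.min (S k) P) * c = sum_n (fun j => if (j <? P)%nat then c else 0) k.
Proof.
  induction k.
  - rewrite sum_O. destruct P. simpl. ring. simpl. ring.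
  - rewrite sum_n_S_R, <- IHk. destruct (Nat.ltb_spec (S k) P).
    + rewrite !Nat.min_l by lia. rewrite (S_INR (S k)). ring.
    + rewrite (Nat.min_r (S (S k))) by lia. destruct (Nat.le_gt_cases P (S k)).
      rewrite Nat.min_r by lia. ring. lia.
Qed.

Definition ev (n : nat) : nat -> C := fun j => if (j <? 2 ^ n)%nat then (/ sqrt (2 ^ n), 0) else (0, 0).

Lemma ev_sum n k : sum_n (ev n) k = (INR (Nat.min (S k) (2 ^ n)) * / sqrt (2 ^ n), 0).
Proof.
  apply Ceq.
  - rewrite fst_sum_n. rewrite sum_ind_R. apply sum_n_ext. intros j. unfold ev. destruct (j <? 2 ^ n)%nat; auto.
  - rewrite snd_sum_n. simpl. rewrite <- (sum_n_zero_R k). apply sum_n_ext. intros j. unfold ev. destruct (j <? 2 ^ n)%nat; auto.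
Qed.

Lemma sqrt2n_pos n : 0 < sqrt (2 ^ n).
Proof. apply sqrt_lt_R0, pow2_gt0. Qed.

Lemma ev_sq n j : Cmod (ev n j) ^ 2 = if (j <? 2 ^ n)%nat then / 2 ^ n else 0.
Proof.
  rewrite Cmod_sq. unfold ev. pose proof (sqrt2n_pos n). pose proof (pow2_gt0 n).
  destruct (j <? 2 ^ n)%nat; simpl.
  - rewrite <- (sqrt_sqrt (2 ^ n)) at 3 by lra. field. lra.
  - ring.
Qed.

Lemma ev_partial n N : sum_n (fun j => Cmod (ev n j) ^ 2) N <= 1.
Proof.
  rewrite (sum_n_ext _ _ N (ev_sq n)). rewrite <- sum_ind_R.
  pose proof (pow2_gt0 n). 
  assert (INR (Nat.min (S N) (2 ^ n)) <= 2 ^ n) by (rewrite <- INR_pow2; apply le_INR; lia).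
  apply (Rmult_le_reg_r (2 ^ n)); auto. rewrite Rmult_assoc, Rinv_l by lra. lra.
Qed.

Lemma ev_l2 n : in_l2 (ev n) /\ l2norm (ev n) <= 1.
Proof.
  destruct (nonneg_bounded_series (fun j => Cmod (ev n j) ^ 2) 1 (fun j => Cmod_sq_nonneg _) (ev_partial n)) as [Hex Hs].
  split. exact Hex. unfold l2norm. rewrite <- sqrt_1. apply sqrt_le_1_alt. exact Hs.
Qed.

Section Rh3.
Variable alpha : nat -> C.
Hypothesis hal : in_l2 alpha.

Lemma rhaly_ev_sq n k : Cmod (rhaly alpha (ev n) k) ^ 2 = aa alpha k * (INR (Nat.min (S k) (2 ^ n)) ^ 2 / 2 ^ n).
Proof.
  unfold rhaly, aa. rewrite Cmod_mult, Rpow_mult_distr, ev_sum. f_equal.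
  rewrite Cmod_sq. cbn [fst snd]. pose proof (sqrt2n_pos n). pose proof (pow2_gt0 n).
  rewrite <- (sqrt_sqrt (2 ^ n)) at 2 by lra. field. lra.
Qed.

Lemma block_lower n : in_l2 (rhaly alpha (ev n)) ->
  dyadic_block alpha n <= Series (fun k => Cmod (rhaly alpha (ev n) k) ^ 2).
Proof.
  intros Hl. eapply Rle_trans. 2: apply (partial_le_series _ (2 ^ S n - 1)); auto; intros; apply Cmod_sq_nonneg.
  eapply Rle_trans. 2: apply sum_n_m_le_sum_n; intros; apply Cmod_sq_nonneg.
  unfold dyadic_block. fold (aa alpha). rewrite Rmult_comm, <- sum_n_m_Rmult_r.
  right. apply sum_n_m_ext_loc. intros k Hk. match goal with |- ?a = ?b => change (@eq R a b) end. rewrite rhaly_ev_sq.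
  rewrite Nat.min_r by lia. rewrite INR_pow2. pose proof (pow2_gt0 n). field. lra.
Qed.

Lemma rhaly_ev_small k n : Cmod (rhaly alpha (ev n) k) ^ 2 <= aa alpha k * INR (S k) ^ 2 / 2 ^ n.
Proof.
  rewrite rhaly_ev_sq. pose proof (pow2_gt0 n). pose proof (aa_nonneg alpha k).
  assert (INR (Nat.min (S k) (2 ^ n)) <= INR (S k)) by (apply le_INR; lia).
  assert (0 <= INR (Nat.min (S k) (2 ^ n))) by apply pos_INR.
  unfold Rdiv. rewrite <- Rmult_assoc. apply Rmult_le_compat_r. left; apply Rinv_0_lt_compat; auto.
  apply Rmult_le_compat_l; auto. apply pow_incr; lra.
Qed.

Lemma cmod_le_l2norm (h : nat -> C) k : in_l2 h -> Cmod (h k) <= l2norm h.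
Proof.
  intros Hh. unfold l2norm. rewrite <- (sqrt_pow2 (Cmod (h k))) by apply Cmod_ge_0.
  apply sqrt_le_1_alt. eapply Rle_trans. 2: apply (partial_le_series _ k); auto; intros; apply Cmod_sq_nonneg.
  destruct k. rewrite sum_O; lra. rewrite sum_n_S_R.
  pose proof (sum_n_nonneg (fun n => Cmod (h n) ^ 2) k (fun n => Cmod_sq_nonneg _)). lra.
Qed.

Lemma l2_minus f g : in_l2 f -> in_l2 g -> in_l2 (fun k => Cminus (f k) (g k)).
Proof.
  intros Hf Hg. unfold in_l2.
  apply (ex_series_le (K:=R_AbsRing) (V:=R_CompleteNormedModule) _ (fun k => 2 * Cmod (f k) ^ 2 + 2 * Cmod (g k) ^ 2)).
  - intros n. unfold norm; simpl. rewrite Rabs_pos_eq by apply Cmod_sq_nonneg. apply Cmod_minus_sq.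
  - apply (ex_series_plus (K:=R_AbsRing) (V:=R_CompleteNormedModule)); apply (ex_series_scal_l (K:=R_AbsRing) (V:=R_CompleteNormedModule) 2); auto.
Qed.

Lemma i_to_iii : compact_on_l2 (rhaly alpha) -> is_lim_seq (dyadic_block alpha) 0.
Proof.
  intros [Hmap Hcomp].
  apply NNPP. intros Hn.
  assert (Hex : exists delta, 0 < delta /\ forall N, exists n, (N <= n)%nat /\ delta <= dyadic_block alpha n).
  { apply NNPP. intros Hno. apply Hn. apply is_lim_seq_spec. intros eps.
    apply NNPP. intros Hev. apply Hno. exists eps. split. apply cond_pos. intros N.
    apply NNPP. intros HN. apply Hev. exists N. intros n Hn'.
    pose proof (D_nonneg alpha n). rewrite Rminus_0_r, Rabs_pos_eq by auto.
    apply Rnot_le_lt. intros Hle. apply HN. exists n. auto. }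
  destruct Hex as [delta [Hdel Hinf]].
  destruct (choice _ Hinf) as [f Hf].
  set (psi := fix psi k := match k with 0%nat => f 0%nat | S k' => f (S (psi k')) end).
  assert (Hpsi : forall k, delta <= dyadic_block alpha (psi k)).
  { intros k. destruct k; simpl; apply Hf. }
  assert (Hpsi_ge : forall k, (k <= psi k)%nat).
  { induction k. lia. simpl. pose proof (proj1 (Hf (S (psi k)))). lia. }
  destruct (Hcomp (fun m => ev (psi m)) (fun m => ev_l2 (psi m))) as [phi [Hphi [g [Hg Hlim]]]].
  assert (Hphi_ge : forall m, (m <= phi m)%nat) by (apply sincr_ge; exact Hphi).
  set (h := fun m k => Cminus (rhaly alpha (ev (psi (phi m))) k) (g k)).
  assert (Hhl2 : forall m, in_l2 (h m)) by (intros; apply l2_minus; auto; apply Hmap; apply ev_l2).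
  assert (Hg0 : forall k, g k = (0, 0)).
  { intros k. apply Cmod_eq_0.
    assert (Hle : forall m, Cmod (g k) <= sqrt (aa alpha k * INR (S k) ^ 2 / 2 ^ m) + l2norm (h m)).
    { intros m. replace (g k) with (Cminus (rhaly alpha (ev (psi (phi m))) k) (h m k)) by (apply Ceq; unfold h; simpl; ring).
      eapply Rle_trans. 
      { replace (Cminus (rhaly alpha (ev (psi (phi m))) k) (h m k)) with (Cplus (rhaly alpha (ev (psi (phi m))) k) (Copp (h m k))) by (apply Ceq; simpl; ring).
        apply Cmod_triangle. }
      rewrite Cmod_opp. apply Rplus_le_compat. 
      - rewrite <- (sqrt_pow2 (Cmod _)) by apply Cmod_ge_0. apply sqrt_le_1_alt.
        eapply Rle_trans. apply rhaly_ev_small. pose proof (aa_nonneg alpha k). pose proof (pos_INR (S k)).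
        pose proof (pow2_gt0 m). pose proof (pow2_gt0 (psi (phi m))).
        assert (2 ^ m <= 2 ^ psi (phi m)) by (apply Rle_pow; [lra | pose proof (Hpsi_ge (phi m)); pose proof (Hphi_ge m); lia]).
        unfold Rdiv. apply Rmult_le_compat_l. apply Rmult_le_pos; auto. apply pow2_ge_0.
        apply Rinv_le_contravar; auto.
      - apply cmod_le_l2norm; auto. }
    assert (Hto0 : is_lim_seq (fun m => sqrt (aa alpha k * INR (S k) ^ 2 / 2 ^ m) + l2norm (h m)) 0).
    { replace (Finite 0) with (Finite (sqrt 0 + 0)) by (rewrite sqrt_0; f_equal; ring).
      apply is_lim_seq_plus'. 2: exact Hlim.
      apply (is_lim_seq_continuous sqrt). apply continuity_pt_sqrt. lra.
      apply (is_lim_seq_ext (fun m => (aa alpha k * INR (S k) ^ 2) * (/ 2) ^ m)).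
      intros m. rewrite pow_inv. unfold Rdiv. auto.
      replace 0 with ((aa alpha k * INR (S k) ^ 2) * 0) by ring.
      apply is_lim_seq_mult'. apply is_lim_seq_const. apply is_lim_seq_geom. rewrite Rabs_pos_eq; lra. }
    pose proof (is_lim_seq_le _ _ _ _ Hle (is_lim_seq_const _) Hto0). simpl in H.
    pose proof (Cmod_ge_0 (g k)). lra. }
  apply is_lim_seq_spec in Hlim.
  assert (Hsd : 0 < sqrt delta) by (apply sqrt_lt_R0; auto).
  destruct (Hlim (mkposreal _ Hsd)) as [N HN]. simpl in HN.
  specialize (HN N (le_n _)).
  assert (Heq : l2norm (fun k => Cminus (rhaly alpha (ev (psi (phi N))) k) (g k)) = l2norm (rhaly alpha (ev (psi (phi N))))).
  { unfold l2norm. f_equal. apply Series_ext. intros k. rewrite Hg0. f_equal. f_equal. apply Ceq; simpl; ring. }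
  rewrite Heq, Rminus_0_r, Rabs_pos_eq in HN by apply sqrt_pos.
  pose proof (block_lower (psi (phi N)) (Hmap _ (proj1 (ev_l2 _)))).
  pose proof (Hpsi (phi N)).
  assert (sqrt delta <= l2norm (rhaly alpha (ev (psi (phi N))))) by (unfold l2norm; apply sqrt_le_1_alt; lra).
  lra.
Qed.
End Rh3.


Theorem theorem1p2 (alpha : nat -> C) (halpha : in_l2 alpha) :
  (compact_on_l2 (rhaly alpha) <-> in_small_mean_lip alpha) /\
  (in_small_mean_lip alpha <-> is_lim_seq (dyadic_block alpha) 0).
Proof.
  split; split; intros H.
  - apply iii_to_ii; auto. apply (i_to_iii alpha); auto.
  - apply iii_to_i; auto. apply ii_to_iii; auto. apply H.
  - apply ii_to_iii; auto. apply H.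
  - apply iii_to_ii; auto.
Qed.
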